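(* Let $n\ge1$ be an integer, $0<h<1$, and let $K$ be a kernel supported on $[-1,1]$, symmetric about $0$, bounded, with $\int_{-1}^1K(x)dx=1$, such that $1-\int_{-2/n}^{2/n}\frac1hK(\frac uh)du\ne0$. For $t\in\mathbb{Z}$ define $$K_n^h(t)=\frac{\int_{|t|/n}^{(|t|+1)/n}\frac1hK(\frac uh)\,du}{1-\int_{-2/n}^{2/n}\frac1hK(\frac uh)\,du}\,\mathbb{1}_{\{|t|\ge2\}}.$$ Then for every integer $i$ with $\lceil nh\rceil\le i\le n-\lceil nh\rceil$ we have $\sum_{j=0}^{n-1}K_n^h(i-j)=1$. *)

(* Defs.v *)
From HB Require Import structures.
From mathcomp Require Import all_boot all_order all_algebra.
From mathcomp Require Import all_classical all_reals all_analysis.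
Set Implicit Arguments. Unset Strict Implicit. Unset Printing Implicit Defensive.
Import Order.TTheory GRing.Theory Num.Theory.
Import numFieldNormedType.Exports.
Local Open Scope classical_set_scope.
Local Open Scope ring_scope.

Definition Kscaled (R : realType) (K : R -> R) (h : R) : R -> R :=
  fun u => h^-1 * K (u / h).

Definition Iab (R : realType) (f : R -> R) (a b : R) : R :=
  \int[@lebesgue_measure R]_(u in `[a, b]) f u.

Definition Knh (R : realType) (K : R -> R) (n : nat) (h : R) (t : int) : R :=
  if (2 <= `|t|)%N then
    Iab (Kscaled K h) ((`|t|%N)%:R / n%:R) ((`|t|%N).+1%:R / n%:R)
    / (1 - Iab (Kscaled K h) (- (2 / n%:R)) (2 / n%:R))
  else 0.

(* Main.v *)
Set Warnings "-all".
Require Import Defs.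
From HB Require Import structures.
From mathcomp Require Import all_boot all_order all_algebra.
From mathcomp Require Import all_classical all_reals all_analysis.
From mathcomp Require Import ring lra zify measurable_realfun.
Import Order.TTheory GRing.Theory Num.Theory.
Import numFieldNormedType.Exports.
Local Open Scope classical_set_scope.
Local Open Scope ring_scope.

Section S.
Context {R : realType}.
Local Notation mu := (@lebesgue_measure R).

Lemma int_itv (f : R -> R) (mf : measurable_fun setT f)
  (bf : exists M : R, forall x, `|f x| <= M) (a b : R) :
  mu.-integrable `[a, b] (EFin \o f).
Proof.
apply: measurable_bounded_integrable => //.


- exact: compact_finite_measure (@segment_compact _ a b).
- exact: measurable_funTS.
- case: bf => M hM; exists M; split; first exact: num_real.
  by move=> x Mx y _ /=; apply: le_trans (hM y) (ltW Mx).
Qed.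

Lemma Iab_add (f : R -> R) (mf : measurable_fun setT f)
  (bf : exists M : R, forall x, `|f x| <= M) (a b c : R) :
  a <= b -> b <= c -> Iab f a c = Iab f a b + Iab f b c.
Proof.
move=> ab bc; rewrite /Iab.
have := @Rintegral_itvB R f (BLeft a) (BRight c) b (int_itv f mf bf a c).
rewrite !bnd_simp => /(_ ab bc) H.
rewrite [X in _ + X](_ : _ = \int[mu]_(x in `]b, c]) f x).
  by rewrite -H addrC subrK.
rewrite -Rintegral_itv_obnd_cbnd//.
apply: integrableS (int_itv f mf bf a c) => //; apply: subset_itvr; rewrite bnd_simp//.
Qed.

Lemma preN (a b : R) : (-%R @^-1` `[- b, - a]%classic) = `[a, b]%classic :> set R.
Proof.
apply/seteqP; split => x /=; rewrite !in_itv/= => /andP[h1 h2];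
  apply/andP; split; lra.
Qed.

Lemma Iab_sym (f : R -> R) (mf : measurable_fun setT f)
  (bf : exists M : R, forall x, `|f x| <= M) (fs : forall x, f (- x) = f x) (a b : R) :
  Iab f (- b) (- a) = Iab f a b.
Proof.
rewrite /Iab /Rintegral; congr fine.
rewrite (@eq_measure_integral _ _ _ _ (pushforward mu (-%R : R -> measurableTypeR R))); last first.
  move=> A mA _; exact/esym/lebesgue_measureN.
rewrite integral_pushforward //.
- rewrite (preN a b); apply: eq_integral => x _ /=; by rewrite fs.
- exact/measurable_EFinP.
- rewrite (preN a b).
  have := int_itv f mf bf a b. apply: eq_integrable => //. 
  by move=> x _ /=; rewrite fs.
Qed.

End S.

Definition divby {R : realType} (h : R) (u : R) : R := u / h.

Section Sc.
Context {R : realType} (h : R).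
Local Notation mu := (@lebesgue_measure R).

Lemma measurable_divby : measurable_fun setT (@divby R h).
Proof. rewrite /divby; apply: measurable_funM => //; exact: measurable_cst. Qed.

Definition pf : set (measurableTypeR R) -> \bar R :=
  pushforward mu (@divby R h : R -> measurableTypeR R).

Let mf : measurable_fun [set: measurableTypeR R] (@divby R h : R -> measurableTypeR R).
Proof. exact: measurable_divby. Qed.

Let pf0 : pf set0 = 0%E.
Proof. by rewrite /pf /pushforward preimage_set0 measure0. Qed.

Let pf_ge0 A : (0 <= pf A)%E.
Proof. exact: measure_ge0. Qed.

Let pf_sigma_additive : semi_sigma_additive pf.
Proof.
move=> F mF tF mUF; rewrite /pf /pushforward preimage_bigcup.
apply: measure_semi_sigma_additive.
- by move=> n; rewrite -[X in measurable X]setTI; exact: mf.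
- apply/trivIsetP => /= i j _ _ ij; rewrite -preimage_setI.
  by move/trivIsetP : tF => /(_ _ _ _ _ ij) ->//; rewrite preimage_set0.
- by rewrite -preimage_bigcup -[X in measurable X]setTI; exact: mf.
Qed.

HB.instance Definition _ := isMeasure.Build _ _ _
  pf pf0 pf_ge0 pf_sigma_additive.


Hypothesis h0 : 0 < h.

Let hinv0 : 0 <= h^-1. Proof. by rewrite invr_ge0 ltW. Qed.
Let hinv : {nonneg R} := NngNum hinv0.

Lemma pre_divby (a b : R) :
  (@divby R h @^-1` `]a, b]%classic) = `]a * h, b * h]%classic :> set R.
Proof.
rewrite /divby; apply/seteqP; split => x /=; rewrite !in_itv/= => /andP[h1 h2];
  apply/andP; split.
- by rewrite -ltr_pdivlMr.
- by rewrite -ler_pdivrMr.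
- by rewrite ltr_pdivlMr.
- by rewrite ler_pdivrMr.
Qed.

Lemma pfE A : measurable A -> pf A = (h%:E * mu A)%E.
Proof.
move=> mA.
have := @lebesgue_measure_unique R (mscale hinv pf).
move=> /(_ _ A mA) ->; last first.
  move=> _ [[a b]] _ <-.
  change (mu `]a, b]%classic = ((hinv%:num)%:E * mu (divby h @^-1` `]a, b]%classic))%E). rewrite pre_divby.
  rewrite !lebesgue_measure_itv/= !lte_fin ltr_pM2r//.
  case: ifP => ab; last by rewrite mule0.
  rewrite -!EFinD -EFinM; congr (_%:E); field; exact: lt0r_neq0.
rewrite /mscale /= muleA -EFinM mulfV ?gt_eqF// mul1e.
by [].
Qed.

End Sc.
Section T.
Context {R : realType} (h : R) (h0 : 0 < h).
Local Notation mu := (@lebesgue_measure R).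
Let hnn : {nonneg R} := NngNum (ltW h0).
Lemma integral_mscale_s (D : set (measurableTypeR R)) (mD : measurable D) (f : measurableTypeR R -> \bar R) :
  mu.-integrable D f ->
  (\int[mscale hnn mu]_(x in D) f x = h%:E * \int[mu]_(x in D) f x)%E.
Proof.
move=> itf; have mf0 : measurable_fun D f by case/integrableP: itf.
rewrite (integralE (mscale hnn mu) D f) (integralE mu D f).
rewrite (ge0_integral_mscale mu mD hnn (measurable_funepos mf0)); last first.
  by move=> x _; exact: funepos_ge0.
rewrite (ge0_integral_mscale mu mD hnn (measurable_funeneg mf0)); last first.
  by move=> x _; exact: funeneg_ge0.
rewrite [RHS]muleBr//.
apply: fin_num_adde_defl; rewrite fin_numN; exact: integrable_neg_fin_num.
Qed.

Lemma pre_divby_cc (a b : R) :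
  (@divby R h @^-1` `[a, b]%classic) = `[a * h, b * h]%classic :> set R.
Proof.
rewrite /divby; apply/seteqP; split => x /=; rewrite !in_itv/= => /andP[h1 h2];
  apply/andP; split.
- by rewrite -ler_pdivlMr.
- by rewrite -ler_pdivrMr.
- by rewrite ler_pdivlMr.
- by rewrite ler_pdivrMr.
Qed.

Lemma Iab_scale (g : R -> R) (mg : measurable_fun setT g)
  (bg : exists M : R, forall x, `|g x| <= M) (a b : R) :
  Iab (fun u => g (u / h)) (a * h) (b * h) = h * Iab g a b.
Proof.
rewrite /Iab /Rintegral.
have intg : mu.-integrable `[a, b] (EFin \o g) by exact: int_itv.
have mEg : measurable_fun [set: measurableTypeR R] (EFin \o g : measurableTypeR R -> \bar R).
  exact/measurable_EFinP.
have mD : measurable_fun [set: measurableTypeR R] (@divby R h : measurableTypeR R -> measurableTypeR R).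
  exact: measurable_divby.
have intc : mu.-integrable (divby h @^-1` `[a, b]) ((EFin \o g) \o divby h).
  rewrite pre_divby_cc; apply: int_itv.
  - by apply: measurableT_comp => //; exact: measurable_divby.
  - by case: bg => M hM; exists M => x; exact: hM.
have P := integral_pushforward mD mEg intc (measurable_itv `[a, b]).
rewrite pre_divby_cc in P.
rewrite [X in fine X](_ : _ = \int[mu]_(x in `[(a * h)%R, (b * h)%R]) ((EFin \o g) \o divby h) x)%E //.
rewrite -P.
rewrite [X in fine X = _](@eq_measure_integral _ _ _ _ (mscale hnn mu)); last first.
  move=> A mA _; exact: (@pfE R h h0 A mA).
rewrite integral_mscale_s //.
rewrite fineM //; exact: integrable_fin_num.
Qed.
End T.

Theorem lemma7p1 (R : realType) (n : nat) (h : R) (K : R -> R)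
  (hn : (1 <= n)%N) (h0 : 0 < h) (h1 : h < 1)
  (Kmeas : measurable_fun setT K)
  (Ksupp : forall x : R, 1 < `|x| -> K x = 0)
  (Ksym : forall x : R, K (- x) = K x)
  (Kbdd : exists M : R, forall x : R, `|K x| <= M)
  (Kint : Iab K (-1) 1 = 1)
  (Kden : 1 - Iab (Kscaled K h) (- (2 / n%:R)) (2 / n%:R) != 0)
  (i : int)
  (hi1 : Num.ceil (n%:R * h) <= i)
  (hi2 : i <= n%:Z - Num.ceil (n%:R * h)) :
  \sum_(j < n) Knh K n h (i - (j : nat)%:Z) = 1.
Proof.
have hn0 : (0 < n%:R :> R) by rewrite ltr0n.
have [M hM] := Kbdd.
have mK' : measurable_fun [set: R] (fun u : R => K (u / h)).
  exact: (measurableT_comp Kmeas (measurable_divby h)).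
have bK' : exists M, forall x, `|K (x / h)| <= M by exists M.
have mf : measurable_fun setT (Kscaled K h).
  rewrite /Kscaled; apply: measurable_funM => //; exact: measurable_cst.
have bf : exists M, forall x, `|Kscaled K h x| <= M.
  exists (h^-1 * M) => x; rewrite /Kscaled normrM ger0_norm; last by rewrite invr_ge0 ltW.
  by apply: ler_wpM2l => //; rewrite invr_ge0 ltW.
have fs : forall x, Kscaled K h (- x) = Kscaled K h x.
  by move=> x; rewrite /Kscaled mulNr Ksym.
have fz : forall u, h < u -> Kscaled K h u = 0.
  move=> u hu; rewrite /Kscaled Ksupp ?mulr0 //.
  have hu1 : 1 < u / h by rewrite ltr_pdivlMr // mul1r.
  by rewrite gtr0_norm // (lt_trans ltr01 hu1).
set f := Kscaled K h in mf bf fs fz Kden *.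
set F := fun x => Iab f 0 x.
have FZ : forall x, h <= x -> F x = F h.
  move=> x hx; rewrite /F (Iab_add f mf bf 0 h x (ltW h0) hx).
  rewrite [X in _ + X](_ : _ = 0) ?addr0 //.
  rewrite /Iab -Rintegral_itv_obnd_cbnd; last first.
    apply: integrableS (int_itv f mf bf h x) => //; apply: subset_itvr; rewrite bnd_simp//.
  rewrite (@eq_Rintegral _ _ _ _ _ (fun _ => 0)); first by rewrite Rintegral_cst // mul0r.
  by move=> u; rewrite inE /= in_itv /= => /andP[hu _]; exact: fz.
have FS : forall x, Iab f (- x) 0 = F x.
  by move=> x; have := Iab_sym f mf bf fs 0 x; rewrite oppr0.
have N1 : Iab f (- h) h = 1.
  have := @Iab_scale R h h0 K Kmeas Kbdd (-1) 1.
  rewrite mulN1r mul1r Kint mulr1 => E.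
  rewrite /f /Kscaled /Iab RintegralZl //; last exact: int_itv.
  by rewrite /Iab in E; rewrite E mulVf // gt_eqF.
have F2 : F h + F h = 1.
  by rewrite -N1 (Iab_add f mf bf (-h) 0 h) ?oppr_le0 ?(ltW h0) // FS.
have tn0 : 0 <= 2 / n%:R :> R by rewrite divr_ge0 // ltW.
have Dv : 1 - Iab f (- (2 / n%:R)) (2 / n%:R) = F h + F h - (F (2 / n%:R) + F (2 / n%:R)).
  by rewrite (Iab_add f mf bf (-(2/n%:R)) 0 (2/n%:R)) ?oppr_le0 // FS F2.
set Dn := 1 - Iab f (- (2 / n%:R)) (2 / n%:R) in Kden Dv *.
pose Q (x : int) : R := F ((Num.max x 2)%:~R / n%:R).
have key : forall t : int, Knh K n h t = (Q (t + 1) - Q t + (Q (1 - t) - Q (- t))) / Dn.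
  move=> t; rewrite /Knh.
  have Ft : forall k : nat, Iab f (k%:R / n%:R) (k.+1%:R / n%:R) = F (k.+1%:R / n%:R) - F (k%:R / n%:R).
    move=> k; rewrite /F (Iab_add f mf bf 0 (k%:R / n%:R) (k.+1%:R / n%:R)).
    - by rewrite addrC addKr.
    - by rewrite divr_ge0 // ltW.
    - by rewrite ler_pM2r ?invr_gt0 // ler_nat.
  case: ifP => ht.
  - congr (_ / _); rewrite Ft.
    case: t ht => k ht.
    + rewrite /Q (_ : Num.max (k%:Z + 1) 2 = (k.+1)%:Z); last by lia.
      rewrite (_ : Num.max (k%:Z) 2 = k%:Z); last by lia.
      rewrite (_ : Num.max (1 - k%:Z) 2 = 2); last by lia.
      rewrite (_ : Num.max (- k%:Z) 2 = 2); last by lia.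
      by rewrite subrr addr0.
    + rewrite /Q (_ : Num.max (Negz k + 1) 2 = 2); last by lia.
      rewrite (_ : Num.max (Negz k) 2 = 2); last by lia.
      rewrite (_ : Num.max (1 - Negz k) 2 = (k.+2)%:Z); last by lia.
      rewrite (_ : Num.max (- Negz k) 2 = (k.+1)%:Z); last by lia.
      by rewrite subrr add0r.
  - rewrite /Q (_ : Num.max (t + 1) 2 = 2); last by lia.
    rewrite (_ : Num.max t 2 = 2); last by lia.
    rewrite (_ : Num.max (1 - t) 2 = 2); last by lia.
    rewrite (_ : Num.max (- t) 2 = 2); last by lia.
    by rewrite !subrr addr0 mul0r.
rewrite (eq_bigr _ (fun j _ => key _)) -mulr_suml big_split /=.
pose G (j : nat) := Q (i - j%:Z + 1).
pose H (j : nat) := Q (j%:Z - i).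
have S1 : \sum_(j < n) (Q (i - j%:Z + 1) - Q (i - j%:Z)) = G 0%N - G n.
  rewrite (eq_bigr (fun j : 'I_n => - (G j.+1 - G j))); last first.
    move=> j _; rewrite opprB /G; congr (_ - Q _); lia.
  rewrite sumrN -(big_mkord xpredT (fun j => G j.+1 - G j)).
  by rewrite telescope_sumr // opprB.
have S2 : \sum_(j < n) (Q (1 - (i - j%:Z)) - Q (- (i - j%:Z))) = H n - H 0%N.
  rewrite (eq_bigr (fun j : 'I_n => H j.+1 - H j)); last first.
    by move=> j _; rewrite /H; congr (Q _ - Q _); lia.
  by rewrite -(big_mkord xpredT (fun j => H j.+1 - H j)) telescope_sumr.
rewrite S1 S2.
have c0 : 0 <= Num.ceil (n%:R * h) by rewrite ceil_ge0 (lt_le_trans _ (mulr_ge0 (ltW hn0) (ltW h0))) // ltrN10.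
have hi1' : n%:R * h <= i%:~R by rewrite -ceil_le_int.
have hi2' : n%:R * h <= (n%:Z - i)%:~R.
  rewrite -ceil_le_int; move: hi2; set c := Num.ceil _; lia.
have G0 : G 0%N = F h.
  rewrite /G /Q; apply: FZ; rewrite ler_pdivlMr // mulrC (le_trans hi1') // ler_int; lia.
have Gn : G n = F (2 / n%:R).
  by rewrite /G /Q (_ : Num.max (i - n%:Z + 1) 2 = 2) //; lia.
have Hn : H n = F h.
  rewrite /H /Q; apply: FZ; rewrite ler_pdivlMr // mulrC (le_trans hi2') // ler_int; lia.
have H0 : H 0%N = F (2 / n%:R).
  by rewrite /H /Q (_ : Num.max (0%:Z - i) 2 = 2) //; lia.
rewrite G0 Gn Hn H0.
rewrite (_ : F h - F (2 / n%:R) + (F h - F (2 / n%:R)) = Dn); first by rewrite mulfV.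
by rewrite Dv; ring.
Qed.
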